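(* Let $m\in\mathcal{S}(\Lambda)$ and $v\in V$. Then $T_vm$ is the unique element of $\mathcal{S}_v(\Lambda)$ with the following property: there exist an open neighborhood $B$ of $v$ in $V$ and an integer $N>0$ such that $T_vm(k,\lambda)=m(k,\lambda)$ for all $(k,\lambda)\in\mathbb{Z}\oplus\Lambda$ with $k>N$ and $\lambda/k\in B$. In particular $T_vm$ does not depend on the decomposition of $m$ used to define it.
   Context: $V$ finite-dimensional real vector space, $\Lambda\subset V$ full-rank lattice, $\Lambda_{\mathbb{Q}}=\Lambda\otimes\mathbb{Q}$. Rational polyhedron: finite intersection of half-spaces $\{v:\langle a,v\rangle\ge c\}$, $a\in\mathrm{Hom}(\Lambda,\mathbb{Z})\otimes\mathbb{Q}$, $c\in\mathbb{Q}$. $C_{P,\sigma}=\{(t,tv+\sigma):t>0,v\in P\}$, $[C_{P,\sigma}]$ its indicator on $\mathbb{Z}\oplus\Lambda$ (zero if $P=\emptyset$). Quasi-polynomials: algebra generated by polynomials and periodic functions. $\mathcal{S}(\Lambda)$: functions of the form $\sum_{P\in\mathcal{P}}\sum_{\sigma\in\Sigma_P}q_{P,\sigma}[C_{P,\sigma}]$ (a decomposition) with $\mathcal{P}$ rational polyhedra, $\Sigma_P\subset\Lambda_{\mathbb{Q}}$, $q_{P,\sigma}$ quasi-polynomial on $\mathbb{Z}\oplus\Lambda$, and $\{P+[0,1]\sigma\}$ locally finite. A cone is a rational polyhedron $w+K$ ($K$ a closed convex polyhedral cone) with apex set $w+(K\cap-K)$. $\mathcal{S}_v(\Lambda)$ is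 the subspace of $\mathcal{S}(\Lambda)$ of functions admitting a finite decomposition $\sum_{P,\sigma}q_{P,\sigma}[C_{P,\sigma}]$ in which each $P$ is a cone whose apex set contains $v$. For a polyhedron $P$, $T_vP$ is the tangent cone of $P$ at $v$ (the closure of $v+\mathbb{R}_{\ge0}(P-v)$) if $v\in P$, and $T_vP=\emptyset$ if $v\notin P$. Given a decomposition of $m$, $T_vm=\sum_{P,\sigma}q_{P,\sigma}[C_{T_vP,\sigma}]$ (a finite sum, since only finitely many $P$ contain $v$). *)

(* Defs.v *)
From HB Require Import structures.
From mathcomp Require Import all_boot all_order all_algebra.
From mathcomp Require Import all_classical all_reals all_analysis.
Set Implicit Arguments. Unset Strict Implicit. Unset Printing Implicit Defensive.
Import Order.TTheory GRing.Theory Num.Theory.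
Import numFieldNormedType.Exports.
Local Open Scope classical_set_scope.
Local Open Scope ring_scope.

(* Coordinates: V = R^n (row vectors 'rV[R]_n), Lambda = Z^n ('rV[int]_n),
   Lambda_Q = Q^n ('rV[rat]_n).  Functions on Z (+) Lambda have type
   int * 'rV[int]_n -> F, with values in a number field F. *)

Section Defs.
Variables (R : realType) (F : numFieldType) (n : nat).

Local Notation V := 'rV[R]_n.
Local Notation ZL := (int * 'rV[int]_n)%type.

Definition dotV (a x : V) : R := \sum_(j < n) a 0 j * x 0 j.

Definition embL (l : 'rV[int]_n) : V := map_mx (fun z : int => z%:~R) l.
Definition embQ (s : 'rV[rat]_n) : V := map_mx (fun q : rat => ratr q) s.

(* rational polyhedron: finite intersection of half-spaces <a,v> >= c with
   a in Hom(Lambda,Z) (x) Q = Q^n and c in Q *)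
Definition rational_polyhedron (P : set V) : Prop :=
  exists s : seq ('rV[rat]_n * rat),
    P = [set v : V | forall h, h \in s -> ratr h.2 <= dotV (embQ h.1) v].

Definition polyhedral_cone (K : set V) : Prop :=
  exists s : seq V, K = [set x : V | forall a, a \in s -> 0 <= dotV a x].

(* P is a cone w + K whose apex set w + (K cap -K) contains v *)
Definition cone_with_apex (v : V) (P : set V) : Prop :=
  rational_polyhedron P /\
  exists (w : V) (K : set V), polyhedral_cone K /\
    P = [set w + k | k in K] /\
    [set w + k | k in K `&` [set - x | x in K]] v.

Definition Ccone (P : set V) (sigma : 'rV[rat]_n) : set (R * V) :=
  [set x | exists t (p : V), 0 < t /\ P p /\ x = (t, t *: p + embQ sigma)].

Definition indC (P : set V) (sigma : 'rV[rat]_n) (x : ZL) : F :=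
  \1_(Ccone P sigma) ((x.1)%:~R, embL x.2).

(* periodic functions on Z (+) Lambda (period a finite-index sublattice N(Z+Lambda)) *)
Definition periodic (f : ZL -> F) : Prop :=
  exists N : nat, (0 < N)%N /\
    forall (x y : ZL), f (x.1 + (N%:Z) * y.1, x.2 + y.2 *~ N%:Z) = f x.

Inductive quasi_poly : (ZL -> F) -> Prop :=
| qp_coord0 : quasi_poly (fun x => (x.1)%:~R)
| qp_coord (j : 'I_n) : quasi_poly (fun x => (x.2 0 j)%:~R)
| qp_periodic f : periodic f -> quasi_poly f
| qp_add f g : quasi_poly f -> quasi_poly g -> quasi_poly (fun x => f x + g x)
| qp_mul f g : quasi_poly f -> quasi_poly g -> quasi_poly (fun x => f x * g x).

Definition sweep (P : set V) (sigma : 'rV[rat]_n) : set V :=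
  [set p + t *: embQ sigma | p in P & t in `[0, 1]%classic].

Definition locally_finite (I : Type) (S : I -> set V) : Prop :=
  forall w : V, exists U : set V, nbhs w U /\
    finite_set [set i | S i `&` U !=set0].

Record decomposition (I : choiceType) := Decomp {
  dP : I -> set V;
  dsigma : I -> 'rV[rat]_n;
  dq : I -> ZL -> F
}.

Definition valid_decomposition (I : choiceType) (D : decomposition I) : Prop :=
  (forall i, rational_polyhedron (dP D i)) /\
  (forall i, quasi_poly (dq D i)) /\
  locally_finite (fun i => sweep (dP D i) (dsigma D i)).

Definition decomposes (I : choiceType) (D : decomposition I) (m : ZL -> F) :=
  valid_decomposition D /\
  m = fun x => \sum_(i \in [set: I]) dq D i x * indC (dP D i) (dsigma D i) x.

Definition in_S (m : ZL -> F) : Prop :=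
  exists (I : choiceType) (D : decomposition I), decomposes D m.

Definition in_Sv (v : V) (m : ZL -> F) : Prop :=
  exists (k : nat) (P : 'I_k -> set V) (sigma : 'I_k -> 'rV[rat]_n)
         (q : 'I_k -> ZL -> F),
    (forall i, cone_with_apex v (P i)) /\ (forall i, quasi_poly (q i)) /\
    m = fun x => \sum_(i < k) q i x * indC (P i) (sigma i) x.

Definition tangent_cone (v : V) (P : set V) : set V :=
  [set x | P v /\
     closure [set v + t *: (p - v) | t in [set t : R | 0 <= t] & p in P] x].

Definition Tv (I : choiceType) (D : decomposition I) (v : V) : ZL -> F :=
  fun x => \sum_(i \in [set i | dP D i v])
             dq D i x * indC (tangent_cone v (dP D i)) (dsigma D i) x.

Definition agree_near (v : V) (g m : ZL -> F) : Prop :=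
  exists B : set V, open B /\ B v /\
    exists N : nat, (0 < N)%N /\
      forall (k : int) (l : 'rV[int]_n), (N%:Z < k) ->
        B ((k%:~R)^-1 *: embL l) -> g (k, l) = m (k, l).

End Defs.

(* Main.v *)
Set Warnings "-all".
Require Import Defs.
From HB Require Import structures.
From mathcomp Require Import all_boot all_order all_algebra.
From mathcomp Require Import all_classical all_reals all_analysis.
From mathcomp Require Import ring lra.
Set Implicit Arguments. Unset Strict Implicit. Unset Printing Implicit Defensive.
Import Order.TTheory GRing.Theory Num.Theory.
Import numFieldNormedType.Exports.
Local Open Scope classical_set_scope.
Local Open Scope ring_scope.
Section S.
Variables (R : realType) (F : numFieldType) (n : nat).
Local Notation V := 'rV[R]_n.
Local Notation ZL := (int * 'rV[int]_n)%type.

Lemma dotVDr (a x y : V) : dotV a (x + y) = dotV a x + dotV a y.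
Proof. by rewrite /dotV -big_split; apply: eq_bigr => j _; rewrite mxE mulrDr. Qed.
Lemma dotVZr (a x : V) (t : R) : dotV a (t *: x) = t * dotV a x.
Proof. by rewrite /dotV mulr_sumr; apply: eq_bigr => j _; rewrite mxE mulrCA. Qed.
Lemma dotVNr (a x : V) : dotV a (- x) = - dotV a x.
Proof. by rewrite /dotV -sumrN; apply: eq_bigr => j _; rewrite mxE mulrN. Qed.
Lemma dotVBr (a x y : V) : dotV a (x - y) = dotV a x - dotV a y.
Proof. by rewrite dotVDr dotVNr. Qed.
Lemma dotV0r (a : V) : dotV a 0 = 0.
Proof. by rewrite /dotV big1 // => j _; rewrite mxE mulr0. Qed.

Lemma mx_coord_le (x : V) (j : 'I_n) : `|x 0 j| <= `|x|.
Proof.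
rewrite [leRHS]/Num.Def.normr /= mx_normrE; apply/bigmax_geP; right => /=.
by exists (0, j).
Qed.

Definition cst (a : V) : R := \sum_(j < n) `|a 0 j|.
Lemma cst_ge0 a : 0 <= cst a.
Proof. by apply: sumr_ge0 => j _. Qed.

Lemma dotV_bound (a x : V) : `|dotV a x| <= cst a * `|x|.
Proof.
rewrite /dotV /cst mulr_suml; apply: le_trans (ler_norm_sum _ _ _) _.
apply: ler_sum => j _; rewrite normrM; apply: ler_wpM2l => //.
exact: mx_coord_le.
Qed.

Lemma indC_pos (P : set V) s (k : int) (l : 'rV[int]_n) : 0 < k ->
  indC F P s (k, l) = if `[< P ((k%:~R : R)^-1 *: (embL R l - embQ R s)) >] then 1 else 0.
Proof.
move=> k0; rewrite /indC indicE /=.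
have k0' : (k%:~R : R) != 0 by rewrite intr_eq0 gt_eqF.
case: asboolP => HP.
  rewrite (_ : _ \in _ = true) //; apply/mem_set; exists (k%:~R), ((k%:~R : R)^-1 *: (embL R l - embQ R s)).
  split; first by rewrite ltr0z.
  split => //; rewrite scalerA divff // scale1r subrK //.
rewrite (_ : _ \in _ = false) //; apply/negbTE/negP => /set_mem [t [p [t0 [Pp]]]] [E1 E2].
by apply: HP; rewrite E2 -E1 addrK scalerA mulVf ?scale1r.
Qed.

Lemma indC_npos (P : set V) s (k : int) (l : 'rV[int]_n) : k <= 0 ->
  indC F P s (k, l) = 0.
Proof.
move=> k0; rewrite /indC indicE /= (_ : _ \in _ = false) //; apply/negbTE/negP => /set_mem [t [p [t0 [Pp]]]] [E1 E2].
have : (k%:~R : R) <= 0 by rewrite lerz0.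
by rewrite E1 leNgt t0.
Qed.

Definition polyS (s : seq ('rV[rat]_n * rat)) : set V :=
  [set x | forall h, h \in s -> ratr h.2 <= dotV (embQ R h.1) x].
Definition tight (s : seq ('rV[rat]_n * rat)) (v : V) :=
  [seq h <- s | dotV (embQ R h.1) v == ratr h.2].


Lemma sum_ge_term (T : eqType) (r : seq T) (G : T -> R) x :
  (forall y, 0 <= G y) -> x \in r -> G x <= \sum_(y <- r) G y.
Proof.
move=> G0 xr; rewrite (big_rem x xr) /= lerDl; exact: sumr_ge0.
Qed.

Lemma tight_scale s (v x : V) : polyS s v -> polyS (tight s v) x ->
  exists2 e : R, 0 < e & polyS s (v + e *: (x - v)).
Proof.
move=> Pv Tx.
pose G h := `|dotV (embQ R h.1) (x - v)| / (dotV (embQ R h.1) v - ratr h.2).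
have G0 h : h \in s -> 0 <= G h.
  move=> hs; apply: divr_ge0 => //; rewrite subr_ge0; exact: Pv.
pose T := 1 + \sum_(h <- s) (if h \in s then G h else 0).
have T1 : 1 <= T.
  rewrite lerDl; apply: sumr_ge0 => h _; case: ifP => // /G0 //.
have T0 : 0 < T by apply: lt_le_trans T1.
exists T^-1; first by rewrite invr_gt0.
move=> h hs; rewrite dotVDr dotVZr.
have cv := Pv h hs.
case E: (dotV (embQ R h.1) v == ratr h.2).
  have ht : h \in tight s v by rewrite mem_filter E hs.
  have := Tx h ht; rewrite dotVBr (eqP E) => cx.
  rewrite lerDl; apply: mulr_ge0; first by rewrite invr_ge0 ltW.
  by rewrite subr_ge0.
have g0 : 0 < dotV (embQ R h.1) v - ratr h.2.
  by rewrite subr_gt0 lt_neqAle cv eq_sym E.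
have GT : G h <= T.
  have H := @sum_ge_term _ s (fun h => if h \in s then G h else 0) h.
  rewrite hs in H; apply: le_trans (H _ isT) _.
    by move=> y; case: ifP => // /G0.
  by rewrite /T lerDr.
have : `|dotV (embQ R h.1) (x - v)| <= T * (dotV (embQ R h.1) v - ratr h.2).
  by rewrite -ler_pdivrMr.
set d := dotV (embQ R h.1) (x - v); set g := dotV (embQ R h.1) v - ratr h.2 => dT.
have : T^-1 * `|d| <= g by rewrite ler_pdivrMl.
have : - (T^-1 * `|d|) <= T^-1 * d.
  rewrite -mulrN; apply: ler_wpM2l; first by rewrite invr_ge0 ltW.
  have := ler_norm (- d); rewrite normrN; lra.
rewrite /g; lra.
Qed.

Lemma polyS_sub s v : polyS s `<=` polyS (tight s v).
Proof. by move=> x Px h; rewrite mem_filter => /andP[_ /Px]. Qed.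

Lemma tight_eq s v h : h \in tight s v -> dotV (embQ R h.1) v = ratr h.2.
Proof. by rewrite mem_filter => /andP[/eqP]. Qed.

Lemma cone_char s (v : V) : polyS s v ->
  (forall y t, polyS s y -> 0 <= t -> polyS s (v + t *: (y - v))) ->
  polyS s = polyS (tight s v).
Proof.
move=> Pv Hsc; apply/seteqP; split; first exact: polyS_sub.
move=> x Tx; have [e e0 Py] := tight_scale Pv Tx.
have := Hsc _ e^-1 Py; rewrite invr_ge0 ltW // => /(_ isT).
have -> : v + e *: (x - v) - v = e *: (x - v) by rewrite addrC addKr.
by rewrite scalerA mulVf ?gt_eqF // scale1r addrC subrK.
Qed.

Lemma cone_apex_polyS s (v : V) : (forall h, h \in s -> dotV (embQ R h.1) v = ratr h.2) ->
  cone_with_apex v (polyS s).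
Proof.
move=> Hs; split; first by exists s.
pose K := [set y : V | forall a, a \in [seq embQ R h.1 | h <- s] -> 0 <= dotV a y].
exists v, K; split; first by exists [seq embQ R h.1 | h <- s].
split.
  apply/seteqP; split.
    move=> x Px; exists (x - v); last by rewrite addrC subrK.
    move=> a /mapP [h hs ->]; rewrite dotVBr Hs // subr_ge0; exact: Px.
  move=> x [k Kk <-] h hs; rewrite dotVDr -Hs // lerDl.
  by apply: Kk; apply/mapP; exists h.
exists 0; last by rewrite addr0.
split; first by move=> a _; rewrite dotV0r.
exists 0; last by rewrite oppr0.
by move=> a _; rewrite dotV0r.
Qed.

Lemma cone_apex_inv (v : V) P : cone_with_apex v P ->
  exists s, P = polyS s /\ (forall h, h \in s -> dotV (embQ R h.1) v = ratr h.2).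
Proof.
move=> [[s0 Ps0] [w [K [[sa HK] [PK [k0 [Kk0 [x1 Kx1 Ex1]] Ev]]]]]].
have Kadd y z t : K y -> K z -> 0 <= t -> K (y + t *: z).
  rewrite HK => Ky Kz t0 a aS; rewrite dotVDr dotVZr.
  by apply: addr_ge0; [exact: Ky | apply: mulr_ge0 => //; exact: Kz].
have Pv : P v by rewrite PK; exists k0.
have Psc y t : P y -> 0 <= t -> P (v + t *: (y - v)).
  rewrite PK => -[k1 Kk1 <-] t0; rewrite -Ev.
  exists (k0 + t *: (k1 + x1)).
    have Kk1x1 : K (k1 + x1) by rewrite -[x1]scale1r; exact: Kadd.
    exact: Kadd.
  rewrite -Ex1 addrA; congr (_ + _); congr (_ *: _).
  by rewrite opprD opprK addrA [w + k1]addrC addrK.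
have {}Ps0 : P = polyS s0 by [].
exists (tight s0 v); split; last by move=> h; exact: tight_eq.
rewrite Ps0; apply: cone_char; first by rewrite -Ps0.
by move=> y t; rewrite -Ps0; exact: Psc.
Qed.

Lemma tangent_polyS s (v : V) : polyS s v ->
  tangent_cone v (polyS s) = polyS (tight s v).
Proof.
move=> Pv; apply/seteqP; split.
  move=> x [_ Cx] h ht; rewrite leNgt; apply/negP => ltx.
  have he := tight_eq ht.
  set c := ratr h.2 in he ltx *; set a := embQ R h.1 in he ltx *.
  pose eps := (c - dotV a x) / (1 + cst a).
  have cst0 := cst_ge0 a.
  have eps0 : 0 < eps by apply: divr_gt0; rewrite ?subr_gt0 //; lra.
  have [y [[t t0 [p Pp Ey]] By]] := Cx _ (nbhsx_ballx x _ eps0).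
  move: By; rewrite -ball_normE /= => By.
  have cy : c <= dotV a y.
    rewrite -Ey dotVDr dotVZr dotVBr he; rewrite lerDl; apply: mulr_ge0 => //.
    have hs : h \in s by move: ht; rewrite mem_filter => /andP[].
    rewrite subr_ge0; exact: Pp h hs.
  have := dotV_bound a (x - y); rewrite dotVBr.
  have : cst a * `|x - y| <= cst a * eps by apply: ler_wpM2l => //; exact: ltW.
  have : cst a * eps < c - dotV a x.
    rewrite /eps mulrA ltr_pdivrMr; last lra.
    have g0 : 0 < c - dotV a x by lra. rewrite mulrC; nra.
  move=> h1 h2 h3; have := ler_norm (dotV a y - dotV a x); rewrite distrC; lra.
move=> x Tx; split => //.
have [e e0 Py] := tight_scale Pv Tx.
apply: subset_closure; exists e^-1; first by rewrite /= invr_ge0 ltW.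
exists (v + e *: (x - v)) => //.
have -> : v + e *: (x - v) - v = e *: (x - v) by rewrite addrC addKr.
by rewrite scalerA mulVf ?gt_eqF // scale1r addrC subrK.
Qed.

Lemma embQD (z1 z2 : 'rV[rat]_n) : embQ R (z1 + z2) = embQ R z1 + embQ R z2.
Proof. by apply/matrixP => i j; rewrite !mxE rmorphD. Qed.
Lemma embQN (z : 'rV[rat]_n) : embQ R (- z) = - embQ R z.
Proof. by apply/matrixP => i j; rewrite !mxE rmorphN. Qed.
Lemma embQZ t (z : 'rV[rat]_n) : embQ R (t *: z) = ratr t *: embQ R z.
Proof. by apply/matrixP => i j; rewrite !mxE rmorphM. Qed.
Lemma embQB (z1 z2 : 'rV[rat]_n) : embQ R (z1 - z2) = embQ R z1 - embQ R z2.
Proof. by rewrite embQD embQN. Qed.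

Lemma norm_lt_coord (x : V) e : 0 < e -> (forall j, `|x 0 j| < e) -> `|x| < e.
Proof.
move=> e0 H; rewrite [ltLHS]/Num.Def.normr /= mx_normrE.
apply: bigmax_lt => // -[i j] _ /=; by rewrite (ord1 i).
Qed.

Lemma approx_rat (x : R) e : 0 < e -> exists q : rat, `|ratr q - x| < e.
Proof.
move=> e0; have nb : ball x e !=set0 by exists x; exact: ballxx.
have [a [Ba [q _ Eq]]] := @dense_rat R (ball x e) nb (ball_open x e).
by exists q; rewrite Eq distrC; move: Ba; rewrite -ball_normE.
Qed.

Definition dotQ (a z : 'rV[rat]_n) : rat := \sum_(j < n) a 0 j * z 0 j.
Lemma ratr_dotQ a z : ratr (dotQ a z) = dotV (embQ R a) (embQ R z) :> R.
Proof.
by rewrite /dotQ rmorph_sum; apply: eq_bigr => j _; rewrite rmorphM !mxE.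
Qed.

Lemma dens (A : seq ('rV[rat]_n * rat)) (v : V) :
  (forall h, h \in A -> dotV (embQ R h.1) v = ratr h.2) ->
  forall e, 0 < e -> exists z : 'rV[rat]_n,
    (forall h, h \in A -> dotV (embQ R h.1) (embQ R z) = ratr h.2) /\ `|embQ R z - v| < e.
Proof.
elim: A v => [|[a c] A IH] v Hv e e0.
  have [f Hf] := choice (fun j : 'I_n => approx_rat (v 0 j) e0).
  exists (\row_j f j); split => //.
  by apply: norm_lt_coord => // j; rewrite !mxE.
have HvA : forall h, h \in A -> dotV (embQ R h.1) v = ratr h.2.
  by move=> h hA; apply: Hv; rewrite inE hA orbT.
have Hva : dotV (embQ R a) v = ratr c by apply: (Hv (a, c)); rewrite inE eqxx.
have ca0 := cst_ge0 (embQ R a).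
case: (pselect (exists d : 'rV[rat]_n,
   (forall h, h \in A -> dotV (embQ R h.1) (embQ R d) = 0) /\
   dotV (embQ R a) (embQ R d) != 0)) => [[d [Hd ad0]] | Hno].
  set ad := dotV (embQ R a) (embQ R d) in ad0.
  set K := cst (embQ R a) * `|embQ R d| / `|ad|.
  have K0 : 0 <= K by apply: divr_ge0 => //; apply: mulr_ge0.
  have [z [Hz Hzv]] := IH v HvA (e / (1 + K)) (divr_gt0 e0 (ltr_pwDl ltr01 K0)).
  pose t : rat := (c - dotQ a z) / dotQ a d.
  have adQ : ratr (dotQ a d) = ad :> R by rewrite ratr_dotQ.
  have rt : ratr t = (ratr c - dotV (embQ R a) (embQ R z)) / ad :> R.
    by rewrite /t fmorph_div /= rmorphB /= adQ ratr_dotQ.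
  exists (z + t *: d); split.
    move=> h; rewrite inE => /orP[/eqP -> | hA] /=.
      rewrite embQD embQZ dotVDr dotVZr rt -/ad mulfVK //; ring.
    by rewrite embQD embQZ dotVDr dotVZr Hz // Hd // mulr0 addr0.
  rewrite embQD embQZ addrAC.
  apply: le_lt_trans (ler_normD _ _) _.
  rewrite normrZ.
  set u := `|embQ R z - v|.
  have u0 : 0 <= u by rewrite /u normr_ge0.
  have Ht : `|ratr t : R| <= cst (embQ R a) * u / `|ad|.
    rewrite rt normrM normfV ler_pM2r ?invr_gt0 ?normr_gt0 //.
    rewrite -Hva -dotVBr /u -normrN opprB; exact: dotV_bound.
  have : `|ratr t : R| * `|embQ R d| <= K * u.
    apply: le_trans (ler_wpM2r (normr_ge0 _) Ht) _.
    by rewrite le_eqVlt; apply/orP; left; apply/eqP; rewrite /K; ring.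
  have : u * (1 + K) < e by rewrite -ltr_pdivlMr // ltr_pwDl.
  nra.
have Hno' d : (forall h, h \in A -> dotV (embQ R h.1) (embQ R d) = 0) ->
    dotV (embQ R a) (embQ R d) = 0.
  move=> Hd; apply/eqP; apply: contra_notT Hno => ad0; by exists d.
have [z [Hz Hzv]] := IH v HvA e e0.
exists z; split => //.
move=> h; rewrite inE => /orP[/eqP -> | hA]; last exact: Hz.
rewrite /=; apply/eqP; apply: contraT => Hne.
set g := `|dotV (embQ R a) (embQ R z) - ratr c|.
have g0 : 0 < g by rewrite normr_gt0 subr_eq0.
have [z2 [Hz2 Hz2v]] := IH v HvA (g / (1 + cst (embQ R a))) (divr_gt0 g0 (ltr_pwDl ltr01 ca0)).
have E : dotV (embQ R a) (embQ R z) = dotV (embQ R a) (embQ R z2).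
  apply/eqP; rewrite -subr_eq0 -dotVBr -embQB; apply/eqP; apply: Hno' => h0 hA.
  by rewrite embQB dotVBr Hz // Hz2 // subrr.
have B1 : `|dotV (embQ R a) (embQ R z2) - ratr c| <= cst (embQ R a) * `|embQ R z2 - v|.
  by rewrite -Hva -dotVBr; exact: dotV_bound.
have B2 : cst (embQ R a) * `|embQ R z2 - v| <= cst (embQ R a) * (g / (1 + cst (embQ R a))).
  by apply: ler_wpM2l => //; exact: ltW.
have B3 : cst (embQ R a) * (g / (1 + cst (embQ R a))) < g.
  rewrite mulrA ltr_pdivrMr; last lra.
  rewrite mulrC; nra.
have : g < g by rewrite {1}/g E; lra.
by rewrite ltxx.
Qed.

Definition trZ (x : ZL) (j : nat) (w : ZL) : ZL :=
  (x.1 + (j%:Z) * w.1, x.2 + w.2 *~ (j%:Z)).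
Definition scZ (b : nat) (w : ZL) : ZL := (b%:Z * w.1, w.2 *~ b%:Z).

Lemma trZ_mul x j a b w : trZ x (j * (a * b)) w = trZ x (j * a) (scZ b w).
Proof.
rewrite /trZ /scZ /=; congr (_ + _, _ + _).
  by rewrite mulrA -PoszM mulnA.
rewrite -mulrzA -PoszM; congr (_ *~ Posz _); by rewrite [RHS]mulnC mulnA.
Qed.

Lemma trZ0 x w : trZ x 0 w = x.
Proof. by rewrite /trZ mul0r addr0 mulr0z addr0; case: x. Qed.

Lemma qp_poly (f : ZL -> F) : quasi_poly f -> exists M : nat, (0 < M)%N /\
  forall x w, exists p : {poly F}, forall j : nat, f (trZ x (j * M) w) = p.[j%:R].
Proof.
elim => {f}.
- exists 1%N; split => // x w; exists ((x.1)%:~R%:P + (w.1)%:~R%:P * 'X) => j.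
  by rewrite /trZ /= muln1 hornerD hornerM !hornerC hornerX intrD intrM mulrC.
- move=> j0; exists 1%N; split => // x w; exists ((x.2 0 j0)%:~R%:P + (w.2 0 j0)%:~R%:P * 'X) => j.
  rewrite /trZ /= muln1 hornerD hornerM !hornerC hornerX mxE -!pmulrn mulmxnE intrD.
  by rewrite rmorphMn mulr_natr.
- move=> f [N [N0 Hf]]; exists N; split => // x w; exists (f x)%:P => j.
  rewrite hornerC -[RHS](Hf x (j%:Z * w.1, w.2 *~ j%:Z)) /trZ /=.
  congr (f (_ + _, _ + _)).
    by rewrite mulrA [N%:Z * _]mulrC PoszM.
  by rewrite -mulrzA -PoszM.
- move=> f g _ [M1 [M10 H1]] _ [M2 [M20 H2]]; exists (M1 * M2)%N; split.
    by rewrite muln_gt0 M10.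
  move=> x w; have [p1 Hp1] := H1 x (scZ M2 w); have [p2 Hp2] := H2 x (scZ M1 w).
  exists (p1 + p2) => j; rewrite hornerD -Hp1 -Hp2 -!trZ_mul.
  by rewrite [(M2 * M1)%N]mulnC.
- move=> f g _ [M1 [M10 H1]] _ [M2 [M20 H2]]; exists (M1 * M2)%N; split.
    by rewrite muln_gt0 M10.
  move=> x w; have [p1 Hp1] := H1 x (scZ M2 w); have [p2 Hp2] := H2 x (scZ M1 w).
  exists (p1 * p2) => j; rewrite hornerM -Hp1 -Hp2 -!trZ_mul.
  by rewrite [(M2 * M1)%N]mulnC.
Qed.

Lemma poly_vanish (p : {poly F}) (J : nat) :
  (forall j : nat, (J <= j)%N -> p.[j%:R] = 0) -> p = 0.
Proof.
move=> Hp; apply/eqP; apply: contraT => p0.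
have := @max_poly_roots _ p [seq (J + i)%:R | i <- iota 0 (size p)] p0.
rewrite size_map size_iota ltnn; apply.
  apply/allP => y /mapP [i _ ->]; apply/rootP; apply: Hp; exact: leq_addr.
rewrite map_inj_uniq ?iota_uniq // => i1 i2 /eqP; rewrite eqr_nat eqn_add2l.
by move/eqP.
Qed.

Lemma embLD (l1 l2 : 'rV[int]_n) : embL R (l1 + l2) = embL R l1 + embL R l2.
Proof. by apply/matrixP => i j; rewrite !mxE rmorphD. Qed.
Lemma embLz (l : 'rV[int]_n) (c : int) : embL R (l *~ c) = (c%:~R : R) *: embL R l.
Proof.
apply/matrixP => i j; rewrite !mxE.
case: c => c; first by rewrite -!pmulrn mulmxnE rmorphMn mulr_natl.
by rewrite !NegzE !mulrNz mxE -!pmulrn mulmxnE rmorphN rmorphMn mulNr mulr_natl.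
Qed.

Lemma polyS_scale s (t : R) (y : V) : 0 < t ->
  polyS s (t^-1 *: y) <-> (forall h, h \in s -> t * ratr h.2 <= dotV (embQ R h.1) y).
Proof.
move=> t0; split => H h hs; have := H h hs.
  by rewrite dotVZr ler_pdivlMl.
by rewrite dotVZr ler_pdivlMl.
Qed.

Lemma integerize (z : 'rV[rat]_n) : exists (D : int) (mu : 'rV[int]_n),
  0 < D /\ embL R mu = (D%:~R : R) *: embQ R z.
Proof.
exists (\prod_(j < n) denq (z 0 j)).
exists (\row_j (numq (z 0 j) * \prod_(j' < n | j' != j) denq (z 0 j'))).
split; first by apply: prodr_gt0 => j _; exact: denq_gt0.
apply/matrixP => i j; rewrite !mxE [in RHS](bigD1 j) //= (ord1 i) !intrM.
have -> : (numq (z 0 j))%:~R = ratr (z 0 j) * (denq (z 0 j))%:~R :> R.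
  by have := congr1 (@ratr R) (numqE (z 0 j)); rewrite ratr_int rmorphM /= ratr_int.
by rewrite -mulrA mulrC.
Qed.

Lemma ind_inv s sg (z : 'rV[rat]_n) (D : int) (mu : 'rV[int]_n) (kk : int) l (jj : nat) :
  (forall h, h \in s -> dotV (embQ R h.1) (embQ R z) = ratr h.2) ->
  embL R mu = (D%:~R : R) *: embQ R z -> 0 < D -> 0 < kk ->
  indC F (polyS s) sg (trZ (kk, l) jj (D, mu)) = indC F (polyS s) sg (kk, l).
Proof.
move=> Hz Hmu D0 k0.
have k0' : 0 < kk + jj%:Z * D by apply: ltr_wpDr => //; apply: mulr_ge0 => //; exact: ltW.
rewrite /trZ /= !indC_pos //; congr (if _ then _ else _); apply: asbool_equiv_eq.
rewrite !polyS_scale ?ltr0z //.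
have E h : h \in s -> dotV (embQ R h.1) (embL R (l + mu *~ jj%:Z) - embQ R sg) =
   dotV (embQ R h.1) (embL R l - embQ R sg) + (jj%:Z * D)%:~R * ratr h.2.
  move=> hs; rewrite embLD embLz Hmu scalerA !dotVBr dotVDr dotVZr Hz // intrM; ring.
split => H h hs; have := H h hs; rewrite ?E // intrD mulrDl; lra.
Qed.

Lemma vanish (v : V) (k : nat) (P : 'I_k -> set V) (sg : 'I_k -> 'rV[rat]_n)
  (q : 'I_k -> ZL -> F) (B : set V) (N : nat) :
  (forall i, cone_with_apex v (P i)) -> (forall i, quasi_poly (q i)) ->
  open B -> B v ->
  (forall (kk : int) (l : 'rV[int]_n), N%:Z < kk -> B ((kk%:~R : R)^-1 *: embL R l) ->
     \sum_(i < k) q i (kk, l) * indC F (P i) (sg i) (kk, l) = 0) ->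
  forall x, \sum_(i < k) q i x * indC F (P i) (sg i) x = 0.
Proof.
move=> HP Hq oB Bv HB [kk l].
have [sf Hsf] := choice (fun i => cone_apex_inv (HP i)).
have [Mf HMf] := choice (fun i => qp_poly (Hq i)).
pose M := (\prod_(i < k) Mf i)%N.
have M0 : (0 < M)%N by rewrite prodn_gt0 // => i; case: (HMf i).
have HM i x w : exists p : {poly F}, forall j : nat, q i (trZ x (j * M) w) = p.[j%:R].
  have [_ H] := HMf i; have [p Hp] := H x (scZ (\prod_(i' < k | i' != i) Mf i') w).
  exists p => j; rewrite /M (bigD1 i) //= trZ_mul; exact: Hp.
have [r r0 Br] : exists2 r : R, 0 < r & ball v r `<=` B.
  have : nbhs v B by apply: open_nbhs_nbhs; split.
  by move/nbhs_ballP => [r r0 H]; exists r.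
pose A := flatten [seq sf i | i <- enum 'I_k].
have HA h : h \in A -> dotV (embQ R h.1) v = ratr h.2.
  move/flattenP => [s' /mapP [i _ ->] hs]; exact: (Hsf i).2.
have r20 : 0 < r / 2 by apply: divr_gt0.
have [z [Hz Hzv]] := dens HA r20.
have [D [mu [D0 Hmu]]] := integerize z.
case: (leP kk 0) => k0.
  by rewrite big1 // => i _; rewrite indC_npos // mulr0.
have Hinv i jj : indC F (P i) (sg i) (trZ (kk, l) jj (D, mu)) = indC F (P i) (sg i) (kk, l).
  rewrite (Hsf i).1; apply: (@ind_inv _ _ z) => // h hs; apply: Hz; apply/flattenP.
  by exists (sf i) => //; apply/mapP; exists i; rewrite ?mem_enum.
have [pf Hpf] := choice (fun i => HM i (kk, l) (D, mu)).
pose G : {poly F} := \sum_(i < k) pf i * (indC F (P i) (sg i) (kk, l))%:P.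
have HG j : G.[j%:R] = \sum_(i < k) q i (trZ (kk, l) (j * M) (D, mu)) *
     indC F (P i) (sg i) (trZ (kk,l) (j * M) (D, mu)).
  rewrite /G horner_sum; apply: eq_bigr => i _; by rewrite hornerM hornerC Hpf Hinv.
suff G0 : G = 0.
  by have := HG 0%N; rewrite G0 horner0 mul0n trZ0.
pose C := `|embL R l - (kk%:~R : R) *: embQ R z|.
pose J := (N + 1 + Num.trunc (2 * C / r))%N.
apply: (@poly_vanish _ J) => j Jj; rewrite HG /trZ /=.
have M1 : (1 <= M)%N by [].
have jK : j%:Z <= (j * M)%:Z * D.
  rewrite PoszM -mulrA ler_peMr //; rewrite -[1]mulr1; apply: ler_pM => //.
set K := kk + (j * M)%:Z * D.
have K0 : 0 < K by apply: ltr_pwDl => //; apply: mulr_ge0 => //; exact: ltW.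
apply: HB.
  apply: le_lt_trans (ltr_pwDl k0 jK); rewrite lez_nat.
  by apply: leq_trans Jj; rewrite /J -addnA leq_addr.
apply: Br; rewrite -ball_normE /=.
have Kr0 : (0 : R) < K%:~R by rewrite ltr0z.
have Ey : (K%:~R : R)^-1 *: embL R (l + mu *~ (j * M)%:Z) - embQ R z =
    (K%:~R : R)^-1 *: (embL R l - (kk%:~R : R) *: embQ R z).
  rewrite embLD embLz Hmu scalerA; apply/matrixP => a b; rewrite !mxE.
  rewrite /K intrD intrM; field.
  by move: Kr0; rewrite /K intrD PoszM !intrM => /gt_eqF H; rewrite -[_ == _]/(_ == _) H.
set y := _ *: embL R _ in Ey *.
have : `|y - embQ R z| <= r / 2.
  rewrite Ey normrZ gtr0_norm ?invr_gt0 // -/C ler_pdivrMl //.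
  have : 2 * C / r < (Num.trunc (2 * C / r)).+1%:R by exact: truncnS_gt.
  have : ((Num.trunc (2 * C / r)).+1%:R : R) <= K%:~R.
    apply: le_trans (_ : (j%:R : R) <= _).
      by rewrite ler_nat; apply: leq_trans Jj; rewrite /J addn1 addSn ltnS leq_addl.
    rewrite -[j%:R]/((j%:Z)%:~R) ler_int; apply: le_trans jK _.
    by rewrite /K lerDr ltW.
  rewrite ltr_pdivrMr // => h1 h2.
  have := ler_wpM2r (ltW r0) h1; rewrite mulrA; lra.
move=> hyz.
have : `|embQ R z - v| < r / 2 by [].
have H1 := ler_normD (v - embQ R z) (embQ R z - y).
rewrite addrA subrK (distrC v (embQ R z)) (distrC (embQ R z) y) in H1.
lra.
Qed.

Lemma common_delta (T : eqType) (r : seq T) (Q : T -> R -> Prop) :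
  (forall i d d', Q i d -> 0 < d' -> d' <= d -> Q i d') ->
  (forall i, i \in r -> exists2 d, 0 < d & Q i d) ->
  exists2 d, 0 < d & forall i, i \in r -> Q i d.
Proof.
move=> Qmon; elim: r => [|a r IH] H; first by exists 1.
have [da da0 Qa] := H a (mem_head _ _).
have [dr dr0 Qr] := IH (fun i ir => H i (@mem_behead _ (a :: r) _ ir)).
exists (Num.min da dr); first by rewrite lt_min da0.
move=> i; rewrite inE => /orP[/eqP -> | ir].
  by apply: Qmon Qa _ _; rewrite ?lt_min ?da0 ?ge_min ?lexx.
by apply: (Qmon _ _ _ (Qr i ir)); rewrite ?lt_min ?da0 ?ge_min ?lexx ?orbT.
Qed.

Lemma local_tangent (P : set V) (v : V) : rational_polyhedron P ->
  exists2 d, 0 < d & forall y, `|y - v| < d -> (P y <-> tangent_cone v P y).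
Proof.
move=> [s Ps]; have {}Ps : P = polyS s by [].
pose Q (h : 'rV[rat]_n * rat) (d : R) := forall y, `|y - v| < d ->
  (ratr h.2 < dotV (embQ R h.1) v -> ratr h.2 < dotV (embQ R h.1) y) /\
  (dotV (embQ R h.1) v < ratr h.2 -> dotV (embQ R h.1) y < ratr h.2).
have [d d0 Hd] : exists2 d, 0 < d & forall h, h \in s -> Q h d.
  apply: common_delta.
    by move=> h d d' Hd d'0 d'd y yv; apply: Hd; apply: lt_le_trans d'd.
  move=> h _; rewrite /Q.
  set c := ratr h.2; set a := embQ R h.1.
  have ca0 := cst_ge0 a.
  case: (eqVneq (dotV a v) c) => [E | NE].
    exists 1 => // y _; rewrite E ltxx; split => //.
  set g := `|dotV a v - c|.
  have g0 : 0 < g by rewrite normr_gt0 subr_eq0.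
  exists (g / (1 + cst a)); first by apply: divr_gt0 => //; lra.
  move=> y yv.
  have B1 := dotV_bound a (y - v); rewrite dotVBr in B1.
  have B2 : cst a * `|y - v| <= cst a * (g / (1 + cst a)) by apply: ler_wpM2l => //; exact: ltW.
  have B3 : cst a * (g / (1 + cst a)) < g.
    rewrite mulrA ltr_pdivrMr; last lra.
    rewrite mulrC; nra.
  have D1 : `|dotV a y - dotV a v| < g by lra.
  have D2 := ler_norm (dotV a y - dotV a v).
  have D3 := ler_norm (dotV a v - dotV a y); rewrite distrC in D3.
  move: D1; rewrite /g.
  case: (ltrP c (dotV a v)) => cv.
    move=> D1; split => H //; lra.
  move=> D1; split => H //; lra.
exists d => // y yv; rewrite Ps.
case: (pselect (polyS s v)) => Pv.
  rewrite tangent_polyS //; split; first exact: polyS_sub.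
  move=> Ty h hs; case E: (dotV (embQ R h.1) v == ratr h.2).
    by apply: Ty; rewrite mem_filter E.
  have cv : ratr h.2 < dotV (embQ R h.1) v by rewrite lt_neqAle eq_sym E Pv.
  exact/ltW/((Hd h hs y yv).1 cv).
split; last by case.
move=> Py; exfalso; apply: Pv => h hs; rewrite leNgt; apply/negP => vc.
have := (Hd h hs y yv).2 vc; have := Py h hs; lra.
Qed.

Lemma tangent_cone_apex (P : set V) (v : V) : rational_polyhedron P -> P v ->
  cone_with_apex v (tangent_cone v P).
Proof.
move=> [s Ps] Pv; have {}Ps : P = polyS s by [].
rewrite Ps tangent_polyS -?Ps //; apply: cone_apex_polyS => h; exact: tight_eq.
Qed.

Lemma tangent_empty (P : set V) (v : V) sg x : ~ P v -> indC F (tangent_cone v P) sg x = 0.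
Proof.
move=> Pv; rewrite /indC indicE (_ : _ \in _ = false) //; apply/negbTE/negP.
by move=> /set_mem [t [p [_ [[]]]]].
Qed.

Section Dec.
Variables (I : choiceType) (D : decomposition R F n I) (m : ZL -> F) (v : V).
Hypothesis HD : decomposes D m.

Let S0 := [set i | dP D i v].

Lemma S0_finite : exists U : set V, nbhs v U /\
    finite_set [set i | sweep (dP D i) (dsigma D i) `&` U !=set0] /\
    S0 `<=` [set i | sweep (dP D i) (dsigma D i) `&` U !=set0].
Proof.
have [[_ [_ Hlf]] _] := HD.
have [U [nU fU]] := Hlf v; exists U; split => //; split => //.
move=> i Pi; exists v; split; last exact: nbhs_singleton.
exists v => //; exists 0; first by rewrite /= in_itv /= lexx ler01.
by rewrite scale0r addr0.
Qed.

Lemma Tv_in_Sv : in_Sv v (Tv D v).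
Proof.
have [U [_ [fJ S0J]]] := S0_finite.
have fS0 : finite_set S0 := sub_finite_set S0J fJ.
pose r : seq I := finmap.enum_fset (fset_set S0).
pose t := tnth (in_tuple r).
have tS0 j : S0 (t j).
  have : t j \in r by exact: mem_tnth.
  by rewrite /r in_fset_set // => /set_mem.
exists (size r), (fun j => tangent_cone v (dP D (t j))), (fun j => dsigma D (t j)),
  (fun j => dq D (t j)).
have [[HPr [Hq _]] _] := HD.
split; first by move=> j; apply: tangent_cone_apex; [exact: HPr | exact: tS0].
split; first by move=> j; exact: Hq.
apply/funext => x; rewrite /Tv fsbig_finite //.
by rewrite (big_tnth _ _ r xpredT).
Qed.

Lemma Tv_agree : agree_near v (Tv D v) m.
Proof.
have [U [nU [fJ S0J]]] := S0_finite.
set J := [set i | _] in fJ S0J.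
have [[HPr [Hq _]] Hm] := HD.
pose r : seq I := finmap.enum_fset (fset_set J).
have rJ i : (i \in r) = (i \in J) by rewrite /r in_fset_set.
have [d d0 Hd] : exists2 d, 0 < d & forall i, i \in r ->
    forall y, `|y - v| < d -> (dP D i y <-> tangent_cone v (dP D i) y).
  apply: common_delta.
    by move=> i d d' Hd d'0 d'd y yv; apply: Hd; apply: lt_le_trans d'd.
  move=> i _; exact: local_tangent.
have [rU rU0 BU] : exists2 e : R, 0 < e & ball v e `<=` U.
  by move/nbhs_ballP: nU => [e e0 H]; exists e.
pose rho := Num.min d rU.
have rho0 : 0 < rho by rewrite lt_min d0 rU0.
have rhod : rho <= d by rewrite ge_min lexx.
have rhoU : rho <= rU by rewrite ge_min lexx orbT.
pose S := \sum_(i <- r) `|embQ R (dsigma D i)|.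
have S0' : 0 <= S by apply: sumr_ge0.
pose N := (Num.trunc (2 * S / rho)).+1.
exists (ball v (rho / 2)); split; first exact: ball_open.
split; first by apply: ballxx; apply: divr_gt0.
exists N; split => // kk l NK By0.
have k0 : 0 < kk by apply: lt_trans NK.
have Kr0 : (0 : R) < kk%:~R by rewrite ltr0z.
set Kr := (kk%:~R : R) in Kr0 By0 *.
move: By0; rewrite -ball_normE /= => By0.
set y0 := Kr^-1 *: embL R l in By0.
have Ssig i : i \in r -> Kr^-1 * `|embQ R (dsigma D i)| < rho / 2.
  move=> ir; have Hs : `|embQ R (dsigma D i)| <= S.
    exact: (@sum_ge_term _ r (fun i => `|embQ R (dsigma D i)|)).
  have h1 : 2 * S / rho < N%:R by exact: truncnS_gt.
  have h2 : (N%:R : R) < Kr by rewrite /Kr -[N%:R]/((N%:Z)%:~R) ltr_int.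
  rewrite ltr_pdivrMl // ; rewrite ltr_pdivrMr // in h1.
  have := ler_wpM2r (ltW rho0) (ltW h2); rewrite mulrA; lra.
have Ey i : Kr^-1 *: (embL R l - embQ R (dsigma D i)) = y0 - Kr^-1 *: embQ R (dsigma D i).
  by rewrite scalerBr.
have EM : m (kk, l) = \sum_(i \in J) dq D i (kk, l) * indC F (dP D i) (dsigma D i) (kk, l).
  rewrite Hm /=; apply/esym/fsbig_widen => // i [_ Ji] /=.
  rewrite indC_pos //; case: asboolP => Py; last by rewrite mulr0.
  exfalso; apply: Ji; exists y0; split.
    exists (Kr^-1 *: (embL R l - embQ R (dsigma D i))) => //.
    exists Kr^-1; last by rewrite Ey subrK.
    rewrite /= in_itv /= invr_ge0 ltW //= invr_le1 //.
    by rewrite /Kr -[1]/((1%:Z)%:~R) ler_int.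
    by rewrite unitfE gt_eqF.
  apply: BU; rewrite -ball_normE /=; lra.
have ET : Tv D v (kk, l) = \sum_(i \in J) dq D i (kk, l) *
    indC F (tangent_cone v (dP D i)) (dsigma D i) (kk, l).
  rewrite /Tv; apply: fsbig_widen => // i [_ Si] /=.
  by rewrite tangent_empty // mulr0.
rewrite EM ET; apply: eq_fsbigr => i /set_mem Ji.
have ir : i \in r by rewrite rJ; apply/mem_set.
have yv : `|Kr^-1 *: (embL R l - embQ R (dsigma D i)) - v| < d.
  rewrite Ey.
  have := ler_normD (y0 - v) (- (Kr^-1 *: embQ R (dsigma D i))).
  rewrite normrN normrZ gtr0_norm ?invr_gt0 // addrAC.
  have := Ssig i ir; rewrite distrC in By0; lra.
by rewrite !indC_pos // (asbool_equiv_eq (Hd i ir _ yv)).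
Qed.
End Dec.
End S.

Theorem proposition5p5 (R : realType) (F : numFieldType) (n : nat)
  (I : choiceType) (D : decomposition R F n I)
  (m : int * 'rV[int]_n -> F) (v : 'rV[R]_n) :
  decomposes D m ->
  in_Sv v (Tv D v) /\ agree_near v (Tv D v) m /\
  (forall g, in_Sv v g -> agree_near v g m -> g = Tv D v).
Proof.

move=> HD; have HS := Tv_in_Sv v HD; have HA := Tv_agree v HD.
split => //; split => //.
move=> g [k1 [P1 [s1 [q1 [HP1 [Hq1 Eg]]]]]] [B1 [oB1 [B1v [N1 [_ H1]]]]].
have [k2 [P2 [s2 [q2 [HP2 [Hq2 Et]]]]]] := HS.
have [B2 [oB2 [B2v [N2 [_ H2]]]]] := HA.
pose P i := match fintype.split i with inl a => P1 a | inr b => P2 b end.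
pose sg i := match fintype.split i with inl a => s1 a | inr b => s2 b end.
pose q i := match fintype.split i with inl a => q1 a | inr b => (fun x => -1 * q2 b x) end.
have Hl a : fintype.split (lshift k2 a) = inl a := unsplitK (inl a).
have Hr b : fintype.split (rshift k1 b) = inr b := unsplitK (inr b).
have Hsum x : \sum_(i < k1 + k2) q i x * indC F (P i) (sg i) x = g x - Tv D v x.
  rewrite big_split_ord /= Eg Et /=; congr (_ + _).
    by apply: eq_bigr => a _; rewrite /q /P /sg Hl.
  rewrite -sumrN; apply: eq_bigr => b _; rewrite /q /P /sg Hr.
  by rewrite mulN1r mulNr.
have HV := @vanish R F n v (k1 + k2) P sg q (B1 `&` B2) (maxn N1 N2).
apply/funext => x; apply/eqP; rewrite -subr_eq0; apply/eqP; rewrite -Hsum.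
apply: HV.
- by move=> i; rewrite /P; case: (fintype.split i).
- move=> i; rewrite /q; case: (fintype.split i) => // b.
  apply: qp_mul => //; apply: qp_periodic; exists 1%N; split => //.
- exact: openI.
- by split.
- move=> kk l Nk [B1k B2k]; rewrite Hsum.
  rewrite H1 ?H2 ?subrr //; apply: le_lt_trans Nk; rewrite lez_nat ?leq_maxl ?leq_maxr //.
Qed.
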